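(* Let $0 \le r \le n/2$ be an integer and let $A$ be the adjacency matrix of the subgraph of the Hamming cube $\{0,1\}^n$ induced by the Hamming ball $B(n,r) = \{x : |x| \le r\}$. Then the maximal eigenvalue of $A$ is $\lambda = n - 2x$, where $x$ is the smallest root of the Krawtchouk polynomial $K^{(n)}_{r+1}$. Its multiplicity is $1$, and the corresponding eigenfunction is a positive spherical function on $B(n,r)$ (i.e. its value at a point $y$ depends only on $|y|$).
   Context: The Hamming cube $\{0,1\}^n$ is the graph where two vectors are adjacent iff they differ in exactly one coordinate; $|x|$ is the number of nonzero coordinates of $x$. The Krawtchouk polynomial is $K^{(n)}_k(x)=\sum_{\ell=0}^k(-1)^\ell\binom{x}{\ell}\binom{n-x}{k-\ell}$; its roots are real, distinct and lie in $(0,n)$. *)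

(* Defs.v *)
From mathcomp Require Import all_boot all_order all_algebra.
Set Implicit Arguments. Unset Strict Implicit. Unset Printing Implicit Defensive.
Import Order.TTheory GRing.Theory Num.Theory.
Local Open Scope ring_scope.

Definition cube (n : nat) := {ffun 'I_n -> bool}.

Definition hweight (n : nat) (x : cube n) : nat := #|[pred i | x i]|.

Definition hadj (n : nat) (x y : cube n) : bool := #|[pred i | x i != y i]| == 1%N.

Definition hball (n r : nat) : {set cube n} := [set x | (hweight x <= r)%N].

Definition ball_adj (R : nzRingType) (n r : nat) : 'M[R]_#|hball n r| :=
  \matrix_(i, j) (hadj (enum_val i) (enum_val j))%:R.

Definition gbinom (R : fieldType) (x : R) (l : nat) : R :=
  (\prod_(m < l) (x - m%:R)) / (l`!)%:R.

Definition krawtchouk (R : fieldType) (n k : nat) (x : R) : R :=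
  \sum_(l < k.+1) (-1) ^+ l * gbinom x l * gbinom (n%:R - x) (k - l).

(* Main.v *)
Require Import Defs.
From mathcomp Require Import all_boot all_order all_algebra.
From mathcomp Require Import polyrcf.
From mathcomp Require Import zify ring lra.
Set Implicit Arguments. Unset Strict Implicit. Unset Printing Implicit Defensive.
Import Order.TTheory GRing.Theory Num.Theory.
Local Open Scope ring_scope.

Section Conv.
Variable R : rcfType.
Variables (al be : nat -> R) (a b : R).
Hypothesis hal : forall l, (l.+1)%:R * al l.+1 = - (a - l%:R) * al l.
Hypothesis hbe : forall m, (m.+1)%:R * be m.+1 = (b - m%:R) * be m.

Definition cv k := \sum_(l < k.+1) al l * be (k - l)%N.
Definition cT k := \sum_(l < k.+1) (l%:R * al l) * be (k - l)%N.
Definition cU k := \sum_(l < k.+1) al l * (((k - l)%N)%:R * be (k - l)%N).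

Lemma cv_TU k : k%:R * cv k = cT k + cU k.
Proof.
rewrite /cv /cT /cU mulr_sumr -big_split /=; apply: eq_bigr => i _.
have := ltn_ord i; rewrite ltnS => hi.
rewrite -{1}(subnKC hi) natrD; ring.
Qed.

Lemma cT_S k : cT k.+1 = - a * cv k + cT k.
Proof.
rewrite /cT big_ord_recl /= mul0r mul0r add0r /cv mulr_sumr -big_split /=.
apply: eq_bigr => i _; rewrite /bump /= add1n subSS hal.
rewrite ?leq0n ?add1n.
ring.
Qed.

Lemma cU_S k : cU k.+1 = b * cv k - cU k.
Proof.
rewrite /cU big_ord_recr /= subnn mul0r mulr0 addr0 /cv mulr_sumr.
rewrite -sumrN -big_split /=; apply: eq_bigr => i _.
have := ltn_ord i; rewrite ltnS => hi.
rewrite subSn // hbe; ring.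
Qed.

Lemma cv_rec k : (k.+2)%:R * cv k.+2 = (b - a) * cv k.+1 + (k%:R - a - b) * cv k.
Proof.
have h1 : cT k.+1 - cU k.+1 = (k%:R - a - b) * cv k.
  rewrite cT_S cU_S; have := cv_TU k => h.
  rewrite !mulrBl h; ring.
rewrite cv_TU cT_S cU_S -h1; ring.
Qed.
End Conv.

Section Kraw.
Variable R : rcfType.

Lemma fact_neq0 l : (l`!)%:R != 0 :> R.
Proof. by rewrite pnatr_eq0 -lt0n fact_gt0. Qed.

Lemma gbinom0 (x : R) : gbinom x 0 = 1.
Proof. by rewrite /gbinom big_ord0 fact0 divr1. Qed.

Lemma gbinom1 (x : R) : gbinom x 1 = x.
Proof. by rewrite /gbinom big_ord1 divr1 subr0. Qed.

Lemma gbinomS (x : R) l : (l.+1)%:R * gbinom x l.+1 = (x - l%:R) * gbinom x l.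
Proof.
rewrite /gbinom big_ord_recr /= factS natrM.
have h1 := fact_neq0 l.
have h2 : (l.+1)%:R != 0 :> R by rewrite pnatr_eq0.
field; by rewrite h1 addrC natr1 h2.
Qed.

Variable n : nat.
Definition Kal (y : R) l := (-1) ^+ l * gbinom y l.
Definition Kbe (y : R) m := gbinom (n%:R - y) m.

Lemma kraw_cv (y : R) k : krawtchouk n k y = cv (Kal y) (Kbe y) k.
Proof. by []. Qed.

Lemma kraw0 (y : R) : krawtchouk n 0 y = 1.
Proof. by rewrite /krawtchouk big_ord1 /= !gbinom0 expr0 !mulr1. Qed.

Lemma kraw1 (y : R) : krawtchouk n 1 y = n%:R - 2 * y.
Proof.
rewrite /krawtchouk big_ord_recr big_ord1 /= !gbinom0 gbinom1 subn0 gbinom1 /=.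
ring.
Qed.

Lemma kraw_rec (y : R) k : (k.+2)%:R * krawtchouk n k.+2 y =
  (n%:R - 2 * y) * krawtchouk n k.+1 y - (n%:R - k%:R) * krawtchouk n k y.
Proof.
rewrite !kraw_cv (@cv_rec R (Kal y) (Kbe y) y (n%:R - y)).
- ring.
- move=> l; rewrite /Kal exprS.
  have := gbinomS y l => h.
  rewrite mulrCA h; ring.
- by move=> m; rewrite /Kbe gbinomS.
Qed.
End Kraw.

Section Kpos.
Variable R : rcfType.
Variable n : nat.
Local Notation K k y := (@krawtchouk R n k y).

Lemma kraw_neg_pos (y : R) : y <= -1 -> forall k, (k <= n)%N -> 0 < K k y <= K k.+1 y.
Proof.
move=> hy; elim=> [|k IH] hk.
  rewrite kraw0 kraw1; have : 0 <= n%:R :> R by [].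
  move=> hn; apply/andP; split; lra.
have /andP[hA hAB] := IH (ltnW hk).
have hr := kraw_rec n y k.
set A := K k y in hA hAB hr *; set B := K k.+1 y in hAB hr *; set C := K k.+2 y in hr *.
have hnk : 0 <= n%:R - k%:R :> R.
  by rewrite subr_ge0 ler_nat ltnW.
have h1 : (n%:R - k%:R) * A <= (n%:R - k%:R) * B by rewrite ler_wpM2l.
have hB : 0 < B := lt_le_trans hA hAB.
have hn : 0 <= n%:R :> R by [].
have h2 : 0 <= (n%:R - 2 * y - n%:R - 2) * B by apply: mulr_ge0; lra.
have h3 : 0 <= (k.+2)%:R * (C - B).
  have e : (k.+2)%:R = k%:R + 2 :> R by rewrite -addn2 natrD.
  rewrite mulrBr hr e.
  have hk0 : 0 <= k%:R :> R by [].
  nra.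
apply/andP; split => //.
rewrite -subr_ge0; move: h3; rewrite pmulr_rge0 //.
Qed.

Lemma kraw_neg_pos' (y : R) k : y <= -1 -> (k <= n.+1)%N -> 0 < K k y.
Proof.
move=> hy hk; case: k hk => [|k] hk.
  by have /andP[] := kraw_neg_pos hy (leq0n n).
have /andP[h1 h2] := kraw_neg_pos hy hk; exact: lt_le_trans h1 h2.
Qed.
End Kpos.

Section Kmain.
Variable R : rcfType.
Variable n : nat.
Local Notation K k y := (@krawtchouk R n k y).

Definition gbP (p : {poly R}) l : {poly R} :=
  (\prod_(m < l) (p - (m%:R)%:P)) * (((l`!)%:R)^-1)%:P.
Definition Kp k : {poly R} :=
  \sum_(l < k.+1) ((-1) ^+ l)%:P * gbP 'X l * gbP ((n%:R)%:P - 'X) (k - l).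

Lemma hornerKp k y : (Kp k).[y] = K k y.
Proof.
rewrite /Kp horner_sum /krawtchouk; apply: eq_bigr => l _.
rewrite /gbP /gbinom !hornerM !horner_prod !hornerC.
congr (_ * (_ * _) * (_ * _)); apply: eq_bigr => i _;
  by rewrite !hornerE.
Qed.

Lemma kraw_nonneg k z : (k <= n.+1)%N -> (forall y, y < z -> K k y != 0) -> 0 <= K k z.
Proof.
move=> hk hno; case: (lerP z (-1)) => hz.
  exact/ltW/kraw_neg_pos'.
rewrite leNgt; apply/negP => hneg.
have hm1 := @kraw_neg_pos' R n (-1) k (lexx _) hk.
have hprod : (- Kp k).[-1] <= 0 <= (- Kp k).[z].
  rewrite !hornerN !hornerKp oppr_le0 oppr_ge0 (ltW hm1) /=; exact: ltW.
have [w] := poly_ivt (ltW hz) hprod.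
move=> /andP[hw1 hw2] /rootP; rewrite hornerN hornerKp => /eqP; rewrite oppr_eq0 => /eqP hw.
have : w < z.
  rewrite lt_neqAle hw2 andbT; apply/eqP => ewz; move: hneg; rewrite -ewz hw ltxx //.
by move/hno; rewrite hw eqxx.
Qed.

Lemma kraw_pos_first r x : (r <= n)%N -> K r.+1 x = 0 ->
  (forall y, K r.+1 y = 0 -> x <= y) -> forall j, (j <= r)%N -> 0 < K j x.
Proof.
move=> hrn hx hmin.
pose P := \prod_(j < r) Kp j.+1.
have hPm1 : 0 < P.[-1].
  rewrite horner_prod; apply: prodr_gt0 => j _; rewrite hornerKp.
  apply: kraw_neg_pos' => //; have := ltn_ord j; clear -hrn; lia.
have hP0 : P != 0 by apply/eqP => e; move: hPm1; rewrite e horner0 ltxx.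
have noroot : forall j y, (j < r)%N -> y <= x -> K j.+1 y != 0.
  move=> j y hj hy; apply/eqP => hK.
  have hy1 : -1 < y.
    rewrite ltNge; apply/negP => hle.
    have : 0 < K j.+1 y by apply: kraw_neg_pos' => //; clear -hj hrn; lia.
    by rewrite hK ltxx.
  have ys : y \in roots P (-1) (x + 1).
    apply: root_in_roots => //.
      by rewrite in_itv /= hy1 /=; lra.
    by rewrite rootE horner_prod (bigD1 (Ordinal hj)) //= hornerKp hK mul0r.
  have hsort := sorted_roots (-1) (x + 1) P.
  case es: (roots P (-1) (x + 1)) ys hsort => [//|h t] ys hsort.
  have hs : h \in roots P (-1) (x + 1) by rewrite es mem_head.
  have hroot := root_roots hs.
  have hin := roots_in hs; move: hin; rewrite in_itv /= => /andP[hh1 hh2].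
  have hminh : forall z, z \in roots P (-1) (x + 1) -> h <= z.
    move=> z; rewrite es in_cons => /orP[/eqP -> //|zt].
    have := order_path_min (@lt_trans _ _) hsort => /allP /(_ z zt) /ltW //.
  have hhy : h <= y by apply: hminh; rewrite es.
  have nob : forall j', (j' <= r.+1)%N -> forall z, z < h -> K j' z != 0.
    move=> j' hj' z hz; apply/eqP => hKz.
    case: j' hj' hKz => [|j'] hj' hKz.
      by move: hKz; rewrite kraw0 => /eqP; rewrite oner_eq0.
    have [ej|nej] := eqVneq j' r.
      rewrite ej in hKz; have := hmin z hKz; lra.
    have hj'r : (j' < r)%N by rewrite ltn_neqAle nej -ltnS.
    case: (lerP z (-1)) => hz1.
      have : 0 < K j'.+1 z by apply: kraw_neg_pos' => //; clear -hj'r hrn; lia.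
      by rewrite hKz ltxx.
    have : z \in roots P (-1) (x + 1).
      apply: root_in_roots => //.
        by rewrite in_itv /= hz1 /=; lra.
      by rewrite rootE horner_prod (bigD1 (Ordinal hj'r)) //= hornerKp hKz mul0r.
    move/hminh; lra.
  have nn : forall j', (j' <= r.+1)%N -> 0 <= K j' h.
    move=> j' hj'; apply: kraw_nonneg; first by clear -hj' hrn; lia.
    exact: nob.
  have ex : exists k, (k <= r)%N && (K k h == 0).
    move: hroot; rewrite rootE horner_prod => /prodf_eq0 [i _].
    rewrite hornerKp => hi; exists i.+1; rewrite hi andbT; exact: ltn_ord.
  case: (ex_minnP ex) => k /andP[hk /eqP hKk] hmk.
  case: k hk hKk hmk => [|k] hk hKk hmk.
    by move: hKk; rewrite kraw0 => /eqP; rewrite oner_eq0.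
  have hpos : 0 < K k h.
    rewrite lt_def nn ?andbT; last by clear -hk; lia.
    apply/negP => /eqP e; have := hmk k; rewrite e eqxx andbT => hh.
    by have := hh (ltnW hk); rewrite ltnn.
  have hr := kraw_rec n h k; rewrite hKk mulr0 sub0r in hr.
  have hnk : 0 < n%:R - k%:R :> R by rewrite subr_gt0 ltr_nat; clear -hk hrn; lia.
  have h2 := nn k.+2 hk.
  have : 0 <= (k.+2)%:R * K k.+2 h by apply: mulr_ge0.
  rewrite hr oppr_ge0 leNgt => /negP; apply; exact: mulr_gt0.
move=> j hj; case: j hj => [|j] hj; first by rewrite kraw0 ltr01.
have hj' : (j < r)%N := hj.
rewrite lt_def (noroot j x hj' (lexx x)) /=.
apply: kraw_nonneg; first by clear -hj hrn; lia.
move=> y hy; apply: noroot; [exact: hj | exact: ltW].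
Qed.
End Kmain.


Section Generic.
Variable R : rcfType.
Variable N : nat.
Variable A : 'M[R]_N.
Variable lam : R.
Variable v : 'rV[R]_N.
Hypothesis hsym : forall i j, A i j = A j i.
Hypothesis hnn : forall i j, 0 <= A i j.
Hypothesis hv : v *m A = lam *: v.
Hypothesis hpos : forall i, 0 < v 0 i.

Lemma v_neq0 (i0 : 'I_N) : v != 0.
Proof. apply/eqP => e; have := hpos i0; rewrite e mxE ltxx. by []. Qed.

Lemma gen_eig (i0 : 'I_N) : eigenvalue A lam.
Proof. apply/eigenvalueP; exists v => //; exact: v_neq0. Qed.

Lemma hvi i : \sum_j v 0 j * A j i = lam * v 0 i.
Proof. by have /rowP/(_ i) := hv; rewrite !mxE. Qed.

Lemma gen_bound mu : eigenvalue A mu -> mu <= lam.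
Proof.
case/eigenvalueP => u hu unz.
have hj : forall j, mu * `|u 0 j| <= \sum_i `|u 0 i| * A i j.
  move=> j; have /rowP/(_ j) := hu; rewrite !mxE => e.
  apply: (le_trans (ler_norm _)).
  rewrite normrM normr_id -normrM -e.
  apply: (le_trans (ler_norm_sum _ _ _)); apply: ler_sum => i _.
  by rewrite normrM (ger0_norm (hnn i j)).
have hS : mu * (\sum_j `|u 0 j| * v 0 j) <= lam * (\sum_j `|u 0 j| * v 0 j).
  rewrite !mulr_sumr.
  apply: (le_trans (y := \sum_j (\sum_i `|u 0 i| * A i j) * v 0 j)).
    apply: ler_sum => j _; rewrite mulrA ler_wpM2r //; exact: ltW.
  under eq_bigr => j _ do rewrite mulr_suml.
  rewrite exchange_big /= le_eqVlt; apply/orP; left; apply/eqP; apply: eq_bigr => i _.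
  have := hvi i => e.
  transitivity (`|u 0 i| * \sum_j v 0 j * A j i).
    by rewrite mulr_sumr; apply: eq_bigr => j _; rewrite hsym; ring.
  by rewrite e; ring.
have hpos' : 0 < \sum_j `|u 0 j| * v 0 j.
  have [j hj0] : exists j, u 0 j != 0.
    apply/existsP; apply: contraR unz => /existsPn h; apply/eqP/rowP => j.
    by rewrite mxE; apply/eqP; rewrite -[_ == _]negbK h.
  rewrite (bigD1 j) //=; apply: ltr_wpDr.
    by apply: sumr_ge0 => i _; apply: mulr_ge0 => //; exact: ltW.
  by apply: mulr_gt0 => //; rewrite normr_gt0.
by rewrite -subr_ge0 -(pmulr_lge0 _ hpos') mulrBl subr_ge0.
Qed.

Hypothesis huniq : forall u : 'rV[R]_N, u *m A = lam *: u -> exists c, u = c *: v.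

Lemma gen_rank (i0 : 'I_N) : \rank (eigenspace A lam) = 1%N.
Proof.
have h1 : (v <= eigenspace A lam)%MS by apply/eigenspaceP.
have h2 : (eigenspace A lam <= v)%MS.
  apply/row_subP => i; have /eigenspaceP := row_sub i (eigenspace A lam).
  by move/huniq => [c ->]; apply/sub_rVP; exists c.
apply/eqP; rewrite eqn_leq; have := mxrankS h1; have := mxrankS h2.
by rewrite rank_rV v_neq0 // => -> ->.
Qed.

Lemma gen_uniq :
  (forall Z : pred 'I_N, (forall i j, Z i -> A j i != 0 -> Z j) -> forall i0 i, Z i0 -> Z i) ->
  forall u : 'rV[R]_N, u *m A = lam *: u -> exists c, u = c *: v.
Proof.
move=> hconn u hu.
case: (pickP (fun _ : 'I_N => true)) => [i0 _|none]; last first.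
  by exists 0; apply/rowP => j; have := none j.
case: (@arg_minP _ _ 'I_N i0 xpredT (fun i => u 0 i / v 0 i)) => // im _ him.
set t := u 0 im / v 0 im in him *.
pose w := u - t *: v.
have hw : w *m A = lam *: w by rewrite /w mulmxBl -scalemxAl hu hv scalerBr !scalerA mulrC.
have wge0 : forall j, 0 <= w 0 j.
  move=> j; rewrite /w !mxE subr_ge0 -ler_pdivlMr //; exact: him.
have wim : w 0 im = 0.
  by rewrite /w !mxE /t mulrAC -mulrA divff ?mulr1 ?subrr // gt_eqF.
have Z0 : forall i, w 0 i == 0.
  move=> i; refine (hconn [pred k | w 0 k == 0] _ im i _); last by rewrite /= wim.
  move=> i1 j /eqP hi1 hA; apply/eqP.
  have /rowP/(_ i1) := hw; rewrite mxE [RHS]mxE hi1 mulr0 => hs.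
  have hge : forall k, xpredT k -> 0 <= w 0 k * A k i1 by move=> k _; apply: mulr_ge0.
  have := @psumr_eq0P _ _ xpredT (fun j => w 0 j * A j i1) hge hs j isT.
  by move=> /eqP; rewrite mulf_eq0 (negbTE hA) orbF => /eqP.
exists t; apply/rowP => j; have := Z0 j; rewrite /w !mxE subr_eq0 => /eqP ->.
by [].
Qed.

End Generic.


Section Mup.
Variable R : rcfType.

Lemma sum_ind m (a : 'I_m) (F : 'I_m -> R) : \sum_i (i == a)%:R * F i = F a.
Proof.
rewrite (bigD1 a) //= eqxx mul1r big1 ?addr0 // => i /negbTE ->; by rewrite mul0r.
Qed.

Lemma char_poly_sim n (A D P : 'M[R]_n) : P \in unitmx -> P *m A = D *m P ->
  char_poly A = char_poly D.
Proof.
move=> hP hPA.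
pose P' := map_mx (@polyC R) P.
have e : char_poly_mx D *m P' = P' *m char_poly_mx A.
  rewrite /char_poly_mx mulmxBl mulmxBr -scalar_mxC -!map_mxM hPA //.
have := congr1 determinant e; rewrite !det_mulmx det_map_mx /=.
have hd : (\det P)%:P != 0 by rewrite polyC_eq0 -unitfE -unitmxE.
by rewrite [RHS]mulrC => /(mulIf hd).
Qed.

Variable k : nat.
Variable A : 'M[R]_(1 + k).
Variable lam : R.
Variable v : 'rV[R]_(1 + k).
Hypothesis hsym : forall i j, A i j = A j i.
Hypothesis hv : v *m A = lam *: v.
Hypothesis hpos : forall i, 0 < v 0 i.
Hypothesis huniq : forall u : 'rV[R]_(1 + k), u *m A = lam *: u -> exists c, u = c *: v.

Let i00 : 'I_(1 + k) := lshift k (0 : 'I_1).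
Let v0 := v 0 i00.
Definition Wm : 'M[R]_(k, 1 + k) :=
  \matrix_(j, i) (v0 * (i == rshift 1 j)%:R - v 0 (rshift 1 j) * (i == i00)%:R).

Lemma hv0 : 0 < v0. Proof. exact: hpos. Qed.

Lemma hWv : Wm *m v^T = 0.
Proof.
apply/matrixP => j z; rewrite !mxE.
under eq_bigr => i _ do rewrite !mxE mulrBl -!mulrA.
rewrite sumrB -!mulr_sumr !sum_ind (ord1 z) /v0; ring.
Qed.

Lemma hWinj (w : 'rV[R]_k) : w *m Wm = 0 -> w = 0.
Proof.
move=> h; apply/rowP => j; have /rowP/(_ (rshift 1 j)) := h; rewrite !mxE.
under eq_bigr => i _ do rewrite !mxE eq_rshift eq_rlshift mulr0 subr0 (eq_sym j) mulrCA mulrC.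

rewrite (eq_bigr (fun i => (i == j)%:R * (w 0 i * v0))); last by move=> i _; ring.
rewrite sum_ind => /eqP; rewrite mulf_eq0 (gt_eqF hv0) orbF => /eqP //.
Qed.

Lemma hvv : 0 < (v *m v^T) 0 0.
Proof.
rewrite !mxE (bigD1 i00) //=.
have h1 : 0 <= \sum_(i < 1 + k | i != i00) v 0 i * v^T i 0.
  by apply: sumr_ge0 => i _; rewrite mxE; apply: mulr_ge0; apply: ltW.
have h2 : 0 < v 0 i00 * v^T i00 0 by rewrite mxE; apply: mulr_gt0.
lra.
Qed.

Lemma hAvT : A *m v^T = lam *: v^T.
Proof.
have -> : A = A^T by apply/matrixP => i j; rewrite mxE hsym.
by rewrite -trmx_mul hv linearZ.
Qed.

Lemma horth (u : 'rV[R]_(1 + k)) : u *m v^T = 0 ->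
  u = (\row_j (u 0 (rshift 1 j) / v0)) *m Wm.
Proof.
move=> h; apply/rowP => i; rewrite !mxE.
under eq_bigr => j _ do rewrite !mxE.
case: (splitP i) => [i1 ei | j1 ei].
- have -> : i = i00 by apply: val_inj; rewrite /= ei; case: i1 {ei} => [[]].
  under eq_bigr => j _ do rewrite eq_lrshift mulr0 eqxx mulr1 sub0r.
  have /rowP/(_ 0) := h; rewrite !mxE big_split_ord /= big_ord1.
  under [X in _ + X = _]eq_bigr => j _ do rewrite mxE.
  rewrite mxE => e.
  have e2 : \sum_(j < k) u 0 (rshift 1 j) * v 0 (rshift 1 j) = - (u 0 i00 * v0).
    by rewrite /v0 /i00; apply/eqP; rewrite -addr_eq0 addrC; apply/eqP.
  rewrite (eq_bigr (fun j => - (u 0 (rshift 1 j) * v 0 (rshift 1 j)) / v0)); last first.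
    by move=> j _; rewrite mulrN mulNr; congr (- _); rewrite mulrAC.
  rewrite -mulr_suml sumrN e2 opprK; symmetry; apply: mulfK; by rewrite gt_eqF // hv0.
- have -> : i = rshift 1 j1 by apply: val_inj; rewrite /= ei.
  under eq_bigr => j _ do rewrite eq_rshift eq_rlshift mulr0 subr0.
  rewrite (eq_bigr (fun j => (j == j1)%:R * u 0 (rshift 1 j))); last first.
    move=> j _; rewrite (eq_sym j1); have hne : v0 != 0 by rewrite gt_eqF // hv0.
    by field.
  by rewrite sum_ind.
Qed.

Lemma hstab : (Wm *m A <= Wm)%MS.
Proof.
apply/row_subP => j; rewrite row_mul.
set u := row j Wm *m A.
have hu : u *m v^T = 0.
  rewrite /u -mulmxA hAvT -scalemxAr -row_mul hWv.
  by apply/rowP => z; rewrite !mxE mulr0.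
rewrite (horth hu); exact: submxMl.
Qed.

Lemma hWinj' (w : 'rV[R]_k) (c : R) : w *m Wm = c *: v -> w = 0.
Proof.
move=> h.
have : (w *m Wm) *m v^T = 0 by rewrite -mulmxA hWv mulmx0.
rewrite h -scalemxAl => /rowP/(_ 0); rewrite [LHS]mxE [RHS]mxE => /eqP.
rewrite mulf_eq0 (gt_eqF hvv) orbF => /eqP hc.
by apply: hWinj; rewrite h hc scale0r.
Qed.

Definition Pm : 'M[R]_(1 + k) := col_mx v Wm.

Lemma hPunit : Pm \in unitmx.
Proof.
rewrite -row_free_unit -kermx_eq0; apply/rowV0P => w /sub_kermxP hw.
rewrite -(hsubmxK w) in hw *.
rewrite /Pm mul_row_col in hw.
have e1 : (lsubmx w *m v + rsubmx w *m Wm) *m v^T = 0 by rewrite hw mul0mx.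
rewrite mulmxDl -!mulmxA hWv mulmx0 addr0 in e1.
have hl : lsubmx w = 0.
  apply/rowP => z; rewrite (ord1 z) [RHS]mxE.
  move/rowP: e1 => /(_ 0); rewrite [LHS]mxE big_ord1 [RHS]mxE => /eqP.
  by rewrite mulf_eq0 (gt_eqF hvv) orbF => /eqP.
rewrite hl mul0mx add0r in hw.
by rewrite hl (hWinj hw) row_mx0.
Qed.

Definition Bm : 'M[R]_k := Wm *m A *m pinvmx Wm.
Lemma hWB : Wm *m A = Bm *m Wm.
Proof. by rewrite /Bm mulmxKpV // hstab. Qed.

Definition Dm : 'M[R]_(1 + k) := block_mx (lam%:M : 'M_1) 0 0 Bm.

Lemma hPA : Pm *m A = Dm *m Pm.
Proof.
rewrite /Pm /Dm mul_col_mx mul_block_col !mul0mx addr0 add0r mul_scalar_mx hv hWB //.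
Qed.

Lemma char_Dm : char_poly Dm = ('X - lam%:P) * char_poly Bm.
Proof.
rewrite /char_poly /Dm char_block_diag_mx det_ublock det_mx11 /char_poly_mx !mxE /=.
by rewrite mulr1n.
Qed.

Lemma noroot_B : ~~ root (char_poly Bm) lam.
Proof.
rewrite -eigenvalue_root_char; apply/negP => /eigenvalueP [w hw wnz].
have h : (w *m Wm) *m A = lam *: (w *m Wm).
  by rewrite -mulmxA hWB mulmxA hw scalemxAl.
have [c hc] := huniq h.
by move: wnz; rewrite (hWinj' hc) eqxx.
Qed.

Lemma gen_mup_k : mup lam (char_poly A) = 1%N.
Proof.
rewrite (char_poly_sim hPunit hPA) char_Dm mupM.
- by rewrite (mupNroot noroot_B) addn0 -(expr1 ('X - lam%:P)) mup_XsubCX eqxx.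
- by rewrite polyXsubC_eq0.
- by apply: monic_neq0; apply: char_poly_monic.
Qed.

End Mup.


Section Cube.
Variable n : nat.

Definition flip (y : cube n) (c : 'I_n) : cube n :=
  [ffun i => if i == c then ~~ y i else y i].

Lemma hweight_set (x : cube n) : hweight x = #|[set i | x i]|.
Proof. by apply: eq_card => i; rewrite inE. Qed.

Lemma hweight_flip y c :
  hweight (flip y c) = if y c then (hweight y).-1 else (hweight y).+1.
Proof.
rewrite !hweight_set.
have -> : [set i | flip y c i] =
  if y c then [set i | y i] :\ c else c |: [set i | y i].
  apply/setP => i; case: ifP => hyc; rewrite !inE ffunE;
    by case: eqP => // ->; rewrite hyc.
case: ifP => hyc.
  by rewrite (cardsD1 c [set i | y i]) inE hyc.
by rewrite cardsU1 inE hyc.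
Qed.

Lemma hadj_flip y c : hadj (flip y c) y.
Proof.
rewrite /hadj; apply/eqP; apply: (@eq_card1 _ c) => i; rewrite !inE ffunE.
by case: (i == c); case: (y i).
Qed.

Lemma hadj_sym (x y : cube n) : hadj x y = hadj y x.
Proof. by rewrite /hadj; congr (_ == _); apply: eq_card => i; rewrite !inE eq_sym. Qed.

Lemma flip_eqE (x y : cube n) c : (x == flip y c) = [forall i, (x i != y i) == (i == c)].
Proof.
apply/eqP/forallP => [-> i|h].
  by rewrite ffunE; case: (i == c); case: (y i).
apply/ffunP => i; have := h i; rewrite ffunE.
by case: (i == c); case: (x i); case: (y i).
Qed.

Lemma card_flip (x y : cube n) : #|[pred c | x == flip y c]| = hadj x y.
Proof.
case: (boolP (hadj x y)) => h.
  have /card1P [c0 hc0] := h.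
  apply: (@eq_card1 _ c0) => c; rewrite !inE flip_eqE.
  apply/forallP/idP => [/(_ c)|/eqP -> i].
    by move: (hc0 c); rewrite !inE => ->; rewrite eqxx => /eqP.
  by move: (hc0 i); rewrite !inE => ->.
apply: eq_card0 => c; rewrite !inE; apply/negP => hc.
move: h; rewrite /hadj; apply/negP/negPn/eqP; apply: (@eq_card1 _ c) => i.
by move: hc; rewrite flip_eqE => /forallP /(_ i) /eqP; rewrite !inE.
Qed.

Variable R : rcfType.

Lemma sum_adj (F : cube n -> R) (y : cube n) :
  \sum_x (hadj x y)%:R * F x = \sum_c F (flip y c).
Proof.
transitivity (\sum_c \sum_x (x == flip y c)%:R * F x).
  rewrite exchange_big; apply: eq_bigr => x _; rewrite -mulr_suml; congr (_ * _).
  rewrite -card_flip -sum1_card natr_sum big_mkcond /=; apply: eq_bigr => c _.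
  by rewrite !inE; case: (x == flip y c).
apply: eq_bigr => c _; rewrite (bigD1 (flip y c)) //= eqxx mul1r big1 ?addr0 //.
by move=> x /negbTE ->; rewrite mul0r.
Qed.
End Cube.

Section Ball.
Variables (n r : nat) (R : rcfType).
Local Notation N := #|hball n r|.

Lemma sum_const_pred (P : pred 'I_n) (a : R) : \sum_(i | P i) a = #|P|%:R * a.
Proof. rewrite mulr_natl; exact: sumr_const. Qed.

Lemma ball_mul (f : nat -> R) (y : cube n) : y \in hball n r ->
  \sum_(i < N) f (hweight (enum_val i)) * (hadj (enum_val i) y)%:R =
  (hweight y)%:R * f (hweight y).-1 +
  (n - hweight y)%:R * (if ((hweight y).+1 <= r)%N then f (hweight y).+1 else 0).
Proof.
move=> hy.
rewrite -(big_enum_val (fun x => f (hweight x) * (hadj x y)%:R)) /=.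
rewrite big_mkcond /=.
pose G x := if x \in hball n r then f (hweight x) else 0.
rewrite (eq_bigr (fun x => (hadj x y)%:R * G x)); last first.
  by move=> x _; rewrite /G; case: (x \in hball n r); rewrite ?mulr0 ?mul0r // mulrC.
rewrite sum_adj (bigID (fun c => y c)) /=.
have hyr : (hweight y <= r)%N by move: hy; rewrite inE.
rewrite (eq_bigr (fun _ => f (hweight y).-1)); last first.
  move=> c hc; rewrite /G inE hweight_flip hc ifT //; apply: leq_trans hyr; exact: leq_pred.
rewrite [X in _ + X](eq_bigr (fun _ => if ((hweight y).+1 <= r)%N then f (hweight y).+1 else 0)); last first.
  by move=> c hc; rewrite /G inE hweight_flip (negbTE hc).
rewrite !sum_const_pred.
congr (_ * _ + _ * _); congr (_ %:R).
have hc := cardC [pred c | y c]; rewrite card_ord in hc.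
rewrite /hweight.
match goal with |- #|?D| = _ => have e : #|D| = #|[predC [pred c | y c]]| by apply: eq_card => c; rewrite !inE end.
rewrite e -[X in (X - _)%N]hc addKn; apply: eq_card => c; by rewrite !inE.
Qed.

Lemma z0_in : [ffun _ => false] \in hball n r.
Proof.
rewrite inE /hweight; apply: leq_trans (leq0n r).
by rewrite leqn0; apply/eqP; apply: eq_card0 => i; rewrite !inE ffunE.
Qed.

Definition idx (x : cube n) : 'I_N := enum_rank_in z0_in x.

Lemma wt0 (x : cube n) : hweight x = 0%N -> x = [ffun _ => false].
Proof.
move=> h; apply/ffunP => i; rewrite ffunE; apply/negbTE.
by have := card0_eq h i; rewrite !inE => ->.
Qed.

Lemma wtS (x : cube n) m : hweight x = m.+1 -> exists c, x c.
Proof.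
move=> h; have : (0 < hweight x)%N by rewrite h.
by case/card_gt0P => c; rewrite inE; exists c.
Qed.

Lemma ball_conn (Z : pred 'I_N) :
  (forall i j, Z i -> hadj (enum_val j) (enum_val i) -> Z j) ->
  forall i0 i, Z i0 -> Z i.
Proof.
move=> hZ i0 i hi0.
have eK : forall x, x \in hball n r -> enum_val (idx x) = x.
  by move=> x hx; rewrite /idx enum_rankK_in.
have hdown : forall m x, x \in hball n r -> hweight x = m -> Z (idx x) ->
    Z (idx [ffun _ => false]).
  elim=> [|m IH] x hx hw hZx; first by rewrite -(wt0 hw).
  have [c hc] := wtS hw.
  have hyw : hweight (flip x c) = m by rewrite hweight_flip hc hw.
  have hyb : flip x c \in hball n r.
    by rewrite inE hyw; move: hx; rewrite inE hw => /ltnW.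
  apply: (IH (flip x c)) => //; apply: (hZ _ _ hZx).
  by rewrite !eK // hadj_flip.
have hup : forall m x, x \in hball n r -> hweight x = m ->
    Z (idx [ffun _ => false]) -> Z (idx x).
  elim=> [|m IH] x hx hw hZ0; first by rewrite (wt0 hw).
  have [c hc] := wtS hw.
  have hyw : hweight (flip x c) = m by rewrite hweight_flip hc hw.
  have hyb : flip x c \in hball n r.
    by rewrite inE hyw; move: hx; rewrite inE hw => /ltnW.
  apply: (hZ (idx (flip x c))); first exact: IH.
  by rewrite !eK // hadj_sym hadj_flip.
have e0 : forall j, idx (enum_val j) = j by move=> j; rewrite /idx enum_valK_in.
rewrite -(e0 i); apply: (hup _ _ (enum_valP i) erefl).
apply: (hdown _ (enum_val i0) (enum_valP i0) erefl); by rewrite e0.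
Qed.
End Ball.

Lemma gen_mup (R : rcfType) N (A : 'M[R]_N) lam (v : 'rV[R]_N) (i0 : 'I_N) :
  (forall i j, A i j = A j i) -> v *m A = lam *: v -> (forall i, 0 < v 0 i) ->
  (forall u : 'rV[R]_N, u *m A = lam *: u -> exists c, u = c *: v) ->
  mup lam (char_poly A) = 1%N.
Proof.
case: N A v i0 => [|k] A v i0; first by case: i0.
exact: (@gen_mup_k R k A lam v).
Qed.

Unset Implicit Arguments.

Theorem corollary1p8 (R : rcfType) (n r : nat) (x : R) :
  (2 * r <= n)%N ->
  krawtchouk n r.+1 x = 0 ->
  (forall y : R, krawtchouk n r.+1 y = 0 -> x <= y) ->
  let A := ball_adj R n r in
  let lam := n%:R - 2 * x in
  [/\ eigenvalue A lam,
      (forall mu : R, eigenvalue A mu -> mu <= lam),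
      \rank (eigenspace A lam) = 1%N,
      mup lam (char_poly A) = 1%N &
      exists v : 'rV[R]_#|hball n r|,
        [/\ v *m A = lam *: v,
            (forall i, 0 < v 0 i) &
            (forall i j, hweight (enum_val i) = hweight (enum_val j) -> v 0 i = v 0 j)]].
Proof.
move=> h2r hx hmin A lam.
have hrn : (r <= n)%N by lia.
pose F k := krawtchouk n k x / ('C(n, k))%:R.
have Fpos : forall k, (k <= r)%N -> 0 < F k.
  move=> k hk; apply: divr_gt0; first exact: (kraw_pos_first hrn hx hmin hk).
  by rewrite ltr0n bin_gt0; lia.
have Fr1 : F r.+1 = 0 by rewrite /F hx mul0r.
have eif : forall k, (k <= r)%N -> (if (k.+1 <= r)%N then F k.+1 else 0) = F k.+1.
  move=> k hk; case: ifP => // /negbT; rewrite -ltnNge => hh.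
  by have -> : k = r by lia.
have hrec : forall k, (k <= r)%N ->
    k%:R * F k.-1 + (n - k)%:R * (if (k.+1 <= r)%N then F k.+1 else 0) = lam * F k.
  move=> k hk; rewrite eif //.
  case: k hk => [|k] hk.
    rewrite mul0r add0r subn0 /F kraw0 bin0 divr1 mulr1.
    have [n0|npos] := posnP n.
      have r0 : r = 0%N by clear -h2r n0; lia.
      rewrite n0 mul0r /lam; move: hx; rewrite r0 kraw1 n0 => ->; by [].
    rewrite bin1 kraw1 /lam; field.
    by rewrite pnatr_eq0 -lt0n.
  have hkn : (k.+2 <= n)%N by clear -hk h2r; lia.
  have hC : forall m, (m <= n)%N -> ('C(n, m))%:R != 0 :> R.
    by move=> m hm; rewrite pnatr_eq0 -lt0n bin_gt0.
  have C0 := hC k (ltnW (ltnW hkn)).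
  have C1 := hC k.+1 (ltnW hkn).
  have C2 := hC k.+2 hkn.
  have hnk0 : n%:R - k%:R != 0 :> R.
    by rewrite subr_eq0 eqr_nat; apply/negP => /eqP e; move: hkn; rewrite e ltnNge leqnSn.
  have hnk1 : n%:R - k.+1%:R != 0 :> R.
    by rewrite subr_eq0 eqr_nat; apply/negP => /eqP e; move: hkn; rewrite e ltnn.
  have hk1 : k.+1%:R != 0 :> R by rewrite pnatr_eq0.
  have hk2 : k.+2%:R != 0 :> R by rewrite pnatr_eq0.
  have e1 : (k.+1)%:R * ('C(n, k.+1))%:R = (n%:R - k%:R) * ('C(n, k))%:R :> R.
    by rewrite -natrM mul_bin_left natrM natrB // ltnW // ltnW.
  have e2 : (k.+2)%:R * ('C(n, k.+2))%:R = (n%:R - k.+1%:R) * ('C(n, k.+1))%:R :> R.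
    by rewrite -natrM mul_bin_left natrM natrB // ltnW.
  have hnk : (n - k.+1)%:R = n%:R - k.+1%:R :> R by rewrite natrB // ltnW.
  have hr := kraw_rec n x k.
  rewrite /F hnk /lam /=.
  have eC0 : ('C(n, k))%:R = (k.+1)%:R * ('C(n, k.+1))%:R / (n%:R - k%:R) :> R.
    by rewrite e1 mulrAC divff // mul1r.
  have eC2 : ('C(n, k.+2))%:R = (n%:R - k.+1%:R) * ('C(n, k.+1))%:R / (k.+2)%:R :> R.
    by rewrite -e2 mulrAC divff // mul1r.
  have eK2 : krawtchouk n k.+2 x =
      ((n%:R - 2 * x) * krawtchouk n k.+1 x - (n%:R - k%:R) * krawtchouk n k x) / (k.+2)%:R.
    by rewrite -hr mulrAC divff // mul1r.
  rewrite eC0 eC2 eK2.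
  have a1 : 2 + k%:R = k.+2%:R :> R by rewrite -!natr1; ring.
  have a2 : 1 + k%:R = k.+1%:R :> R by rewrite -natr1 addrC.
  field.
  by rewrite a1 a2 C1 hk2 hnk1 hnk0 hk1.
pose v : 'rV[R]_#|hball n r| := \row_i F (hweight (enum_val i)).
pose i0 : 'I_#|hball n r| := idx r [ffun _ => false].
have hsym : forall i j, A i j = A j i by move=> i j; rewrite /A /ball_adj !mxE hadj_sym.
have hnn : forall i j, 0 <= A i j by move=> i j; rewrite /A /ball_adj mxE ler0n.
have hpos : forall i, 0 < v 0 i.
  by move=> i; rewrite mxE; apply: Fpos; have := enum_valP i; rewrite inE.
have hv : v *m A = lam *: v.
  apply/rowP => j; rewrite !mxE.
  under eq_bigr => i _ do rewrite !mxE.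
  rewrite (@ball_mul n r R F (enum_val j) (enum_valP j)) hrec //.
  by have := enum_valP j; rewrite inE.
have hconn : forall Z : pred 'I_#|hball n r|,
    (forall i j, Z i -> A j i != 0 -> Z j) -> forall i0 i, Z i0 -> Z i.
  move=> Z hZ; apply: ball_conn => i j hi hadj; apply: (hZ i j hi).
  by rewrite /A /ball_adj mxE hadj oner_eq0.
have huniq := gen_uniq hnn hv hpos hconn.
split.
- exact: gen_eig hv hpos i0.
- by move=> mu; apply: gen_bound hsym hnn hv hpos mu.
- exact: gen_rank hv hpos huniq i0.
- exact: gen_mup i0 hsym hv hpos huniq.
- exists v; split => //.
  by move=> i j e; rewrite !mxE e.
Qed.
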